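(* For every finite alphabet $\Sigma$, $L_{\mathrm{UNIQ}}=\Sigma^*\setminus L_{\mathrm{OBST}}$.
   Context: Let $\Sigma$ be a finite alphabet and $\$\notin\Sigma$ a delimiter symbol; $\Sigma_\$=\Sigma\cup\{\$\}$. The bigram map $\Phi$ sends a string $z\in\$\Sigma^*\$$ to the vector $\Phi(z)\in\mathbb{N}^{\Sigma_\$^2}$ whose $(i,j)$ entry is the number of positions at which the two-letter string $ij$ occurs as a contiguous factor of $z$ (counting overlaps). $L_{\mathrm{UNIQ}}$ is the set of $w\in\Sigma^*$ such that the only $z\in\$\Sigma^*\$$ with $\Phi(z)=\Phi(\$w\$)$ is $z=\$w\$$ (''uniquely decodable'' strings). For $x\in\Sigma$ write $\Sigma_{\neg x}=\Sigma\setminus\{x\}$. For $x\in\Sigma$ and $a,b\in\Sigma_{\neg x}$ (with $a=b$ allowed) define $I_{x,a,b}=\Sigma^*\,a\,x\,\Sigma_{\neg a}^*\,b\,\Sigma^*$, $J_{x,a,b}=\Sigma^*\,a\,\Sigma_{\neg x}^*\,b\,\Sigma^*$ (regular-expression notation), $K_{x,a,b}=I_{x,a,b}\cap J_{x,a,b}$, and $L_{\mathrm{OBST}}=\bigcup_{x\in\Sigma}\bigcup_{a,b\in\Sigma_{\neg x}}K_{x,a,b}$. *)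

(* Defs.v *)
From mathcomp Require Import all_boot.
Set Implicit Arguments. Unset Strict Implicit. Unset Printing Implicit Defensive.

(* The alphabet Sigma is a finite type T; the extended alphabet Sigma_$ is
   [option T], with the delimiter $ represented by [None] (so $ is not in
   Sigma) and letters [x] represented by [Some x]. *)

Section Bigram.
Variable T : finType.

Definition delim (w : seq T) : seq (option T) :=
  None :: rcons (map Some w) None.

Definition Phi (z : seq (option T)) : {ffun option T * option T -> nat} :=
  [ffun ij => count (pred1 ij) (zip z (behead z))].

Definition L_UNIQ (w : seq T) : Prop :=
  forall w' : seq T, Phi (delim w') = Phi (delim w) -> delim w' = delim w.

Definition in_I (x a b : T) (w : seq T) : Prop :=
  exists u v m : seq T, all (fun c => c != a) v /\ w = u ++ a :: x :: v ++ b :: m.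

Definition in_J (x a b : T) (w : seq T) : Prop :=
  exists u v m : seq T, all (fun c => c != x) v /\ w = u ++ a :: v ++ b :: m.

Definition in_K (x a b : T) (w : seq T) : Prop := in_I x a b w /\ in_J x a b w.

Definition L_OBST (w : seq T) : Prop :=
  exists x a b : T, a != x /\ b != x /\ in_K x a b w.

End Bigram.

(* Main.v *)
Require Import Defs.
From mathcomp Require Import all_boot.
From mathcomp Require Import zify.
From Stdlib Require Import Classical.
Set Implicit Arguments. Unset Strict Implicit. Unset Printing Implicit Defensive.

Section Gen.
Variable S : eqType.
Implicit Types s u v : seq S.

Fixpoint prs (s : seq S) : seq (S * S) :=
  match s with
  | x :: t => if t is y :: _ then (x, y) :: prs t else [::]
  | [::] => [::]
  end.

Lemma zip_prs s : zip s (behead s) = prs s.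
Proof. case: s => // x t; elim: t x => //= y t IH x; by rewrite -IH. Qed.

Lemma size_prs s : size (prs s) = (size s).-1.
Proof. case: s => // x t; elim: t x => //= y t IH x; by rewrite IH. Qed.

Lemma prs_cat u c v : prs (u ++ c :: v) = prs (rcons u c) ++ prs (c :: v).
Proof.
elim: u => [|e u IH] //; case: u IH => [|e' u] IH //.
by transitivity ((e, e') :: prs ((e' :: u) ++ c :: v)); rewrite // IH.
Qed.

Lemma prs_consc c0 u c v :
  prs (c0 :: u ++ c :: v) = prs (rcons (c0 :: u) c) ++ prs (c :: v).
Proof. exact: (prs_cat (c0 :: u)). Qed.

Variable d : S.

Lemma mem_prs s e : e \in prs s ->
  exists i, [/\ i.+1 < size s, nth d s i = e.1 & nth d s i.+1 = e.2].
Proof.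
case: s => // x t; elim: t x => //= y t IH x.
rewrite in_cons => /orP [/eqP -> | /IH [i [Hi H1 H2]]].
  by exists 0.
by exists i.+1; split.
Qed.

Lemma prs_mem s i : i.+1 < size s -> (nth d s i, nth d s i.+1) \in prs s.
Proof.
case: s => // x t; elim: t x i => //= y t IH x [|i] Hi.
  by rewrite mem_head.
by rewrite in_cons IH ?orbT.
Qed.

Lemma cat_eq u r u' r' : u ++ r = u' ++ r' ->
  exists t, (u' = u ++ t /\ r = t ++ r') \/ (u = u' ++ t /\ r' = t ++ r).
Proof.
elim: u u' => [|e u IH] [|e' u'] /=.
- by move=> ->; exists [::]; left.
- by move=> ->; exists (e' :: u'); left.
- by move=> <-; exists (e :: u); right.
- case=> -> /IH [t [[-> ->]|[-> ->]]]; exists t; [left|right]; done.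
Qed.

Lemma cat_eq1 s d0 r t c q : c \notin s -> s ++ d0 :: r = t ++ c :: q ->
  (exists y, t = s ++ d0 :: y /\ r = y ++ c :: q) \/ (t = s /\ d0 = c /\ r = q).
Proof.
elim: s t => [|e s IH] [|e' t] /=.
- by move=> _ [-> ->]; right.
- by move=> _ [-> ->]; left; exists t.
- by move=> Hc [He _]; move: Hc; rewrite He mem_head.
- rewrite in_cons negb_or => /andP [_ Hc] [-> /(IH _ Hc)].
  case=> [[y [-> ->]]|[-> [-> ->]]]; [left; exists y|right] => //.
Qed.

Lemma first_split (P : pred S) s : has P s ->
  exists s1 c s2, [/\ P c, ~~ has P s1 & s = s1 ++ c :: s2].
Proof.
elim: s => //= e s IH; case: (boolP (P e)) => Pe /=.
  by move=> _; exists [::], e, s.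
move/IH=> [s1 [c [s2 [Pc Hs1 ->]]]].
by exists (e :: s1), c, s2; rewrite /= (negbTE Pe).
Qed.

Lemma last_split (P : pred S) s : has P s ->
  exists s1 c s2, [/\ P c, ~~ has P s2 & s = s1 ++ c :: s2].
Proof.
elim: s => //= e s IH; case: (boolP (has P s)) => Hs.
  move=> _; case: (IH Hs) => s1 [c [s2 [Pc H2 ->]]].
  by exists (e :: s1), c, s2.
by rewrite orbF => Pe; exists [::], e, s.
Qed.


Lemma first_diff c s s' : size s = size s' -> c :: s != c :: s' ->
  exists P a x y R R', [/\ c :: s = P ++ a :: x :: R, c :: s' = P ++ a :: y :: R' & x != y].
Proof.
elim: s c s' => [|e s IH] c [|e' s'] //=; first by rewrite eqxx.
move=> [Hsz] Hne.
case: (eqVneq e e') => [Hee | Hee].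
  subst e'; have Hne' : e :: s != e :: s'.
    by apply: contraNneq Hne => [[->]].
  case: (IH e s' Hsz Hne') => P [a [x [y [R [R' [E1 E2 Hxy]]]]]].
  by exists (c :: P), a, x, y, R, R'; rewrite E1 E2.
by exists [::], c, e, e', s, s'.
Qed.

Lemma catsI' u r r' : u ++ r = u ++ r' -> r = r'.
Proof. by elim: u => //= e u IH [/IH]. Qed.

Lemma head_cat_d (e : S) s r : head e (s ++ e :: r) = head e s.
Proof. by case: s. Qed.

Lemma all_notin a s : all (fun c => c != a) s -> a \notin s.
Proof. by move=> H; apply/negP => h; move/allP: H => /(_ a h); rewrite eqxx. Qed.

Lemma swapA U Sx Y Sy M a b :
  perm_eq (prs (U ++ a :: Sx ++ b :: Y ++ a :: Sy ++ b :: M))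
          (prs (U ++ a :: Sy ++ b :: Y ++ a :: Sx ++ b :: M)).
Proof.
rewrite !(prs_cat U) !(prs_consc a Sx) !(prs_consc a Sy) !(prs_consc b Y).
rewrite ?(prs_consc a Sx) ?(prs_consc a Sy).
by apply/permP => P; rewrite !count_cat; lia.
Qed.

Lemma swapB U Sx Sy M a :
  perm_eq (prs (U ++ a :: Sx ++ a :: Sy ++ a :: M))
          (prs (U ++ a :: Sy ++ a :: Sx ++ a :: M)).
Proof.
rewrite !(prs_cat U) !(prs_consc a Sx) !(prs_consc a Sy).
rewrite ?(prs_consc a Sx) ?(prs_consc a Sy).
by apply/permP => P; rewrite !count_cat; lia.
Qed.

End Gen.

Section Key.
Variables (S : eqType) (d : S).

Definition PosI (s : seq S) (X A B : S) := exists i j,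
  [/\ i.+1 < j, j < size s, nth d s i = A, nth d s i.+1 = X & nth d s j = B] /\
  (forall k, i.+1 < k -> k < j -> nth d s k <> A).
Definition PosJ (s : seq S) (X A B : S) := exists i j,
  [/\ i < j, j < size s, nth d s i = A & nth d s j = B] /\
  (forall k, i < k -> k < j -> nth d s k <> X).

Lemma key (good : pred S) a x y R R' :
  perm_eq (prs (a :: x :: R)) (prs (a :: y :: R')) -> x != y ->
  (forall i, 0 < i -> i.+1 < size (a :: x :: R) -> good (nth d (a :: x :: R) i)) ->
  exists X A B, [/\ good A, good B, A != X & B != X] /\
     PosI (a :: x :: R) X A B /\ PosJ (a :: x :: R) X A B.
Proof.
set s := a :: x :: R; set b := a :: y :: R'.
move=> Hp Hxy Hg.
apply: NNPP => nObs.
have obs : forall X A B, good A -> good B -> A != X -> B != X ->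
    PosI s X A B -> PosJ s X A B -> False.
  by move=> X A B gA gB AX BX HI HJ; apply: nObs; exists X, A, B; split.
clear nObs.
set n := size s.
have s0 : nth d s 0 = a by [].
have s1 : nth d s 1 = x by [].
have b1 : nth d b 1 = y by [].
have bay : (a, y) \in prs b by rewrite /b /= mem_head.
have sax : (a, x) \in prs s by rewrite /s /= mem_head.
have n2 : 1 < n by [].
clearbody s b.
have [q [qn sq sq1]] : exists q, [/\ q.+1 < n, nth d s q = a & nth d s q.+1 = y].
  move: bay; rewrite -(perm_mem Hp) => /(mem_prs d) [q [? ? ?]]; by exists q.
have q0 : 0 < q by case: q sq1 {qn sq} => // Hy; rewrite s1 in Hy; rewrite Hy eqxx in Hxy.
pose P := fun p => [&& 0 < p, p.+1 < n, nth d s p == a & nth d s p.+1 != x].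
have exP : exists p, P p.
  by exists q; apply/and4P; split => //; [apply/eqP | rewrite sq1 eq_sym].
case: (ex_minnP exP) => p /and4P [p0 pn /eqP sp spx] pmin.
have pq : p <= q.
  by apply: pmin; apply/and4P; split => //; [apply/eqP | rewrite sq1 eq_sym].
have minf : forall p', 0 < p' -> p' < p -> nth d s p' = a -> nth d s p'.+1 = x.
  move=> p' h0 h1 h2; have h1' := h1; apply/eqP; apply: contraTT h1 => h3; rewrite -leqNgt.
  by apply: pmin; apply/and4P; split => //; [lia | apply/eqP].
set c := nth d s p.+1.
have ga : good a by rewrite -sp; apply: Hg.
have n3 : 2 < n by lia.
have gx : good x by rewrite -s1; apply: Hg.
have Hdisj : forall i k, i <= p -> p < k -> k < n -> nth d s i <> nth d s k.
  case: (eqVneq x a) => [xa | xa].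
  - have noa : forall r, p < r -> r < n -> nth d s r <> a.
      move=> r pr rn sr.
      pose Q := fun r => [&& p < r, r < n & nth d s r == a].
      have exQ : exists r, Q r by exists r; rewrite /Q pr rn sr eqxx.
      case: (ex_minnP exQ) => r0 /and3P [pr0 r0n /eqP sr0] r0min.
      have ca : c != a by rewrite /c -xa.
      have r0p : p.+1 < r0.
        rewrite ltn_neqAle pr0 andbT; apply/eqP => e; move: ca.
        by rewrite /c e sr0 eqxx.
      apply: (obs c a a) => //; try by rewrite eq_sym.
      + exists p, r0; split; first by split.
        move=> k h1 h2 sk.
        have : r0 <= k by apply: r0min; rewrite /Q sk eqxx andbT; apply/andP; split; lia.
        lia.
      + exists 0, 1; split; first by split => //; rewrite s1 xa.
        move=> k ? ?; lia.
    have alla : forall i, i <= p -> nth d s i = a.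
      elim=> [|i IH] hi //.
      case: i IH hi => [|i] IH hi; first by rewrite s1 xa.
      by have := minf i.+1 erefl hi (IH (ltnW hi)); rewrite xa.
    move=> i k ip pk kn; rewrite alla // => e; exact: (noa k pk kn (esym e)).
  - have noa : forall r, p < r -> r < n -> nth d s r <> a.
      move=> r pr rn sr.
      pose Q := fun r => [&& p < r, r < n & nth d s r == a].
      have exQ : exists r, Q r by exists r; rewrite /Q pr rn sr eqxx.
      case: (ex_minnP exQ) => r0 /and3P [pr0 r0n /eqP sr0] r0min.
      case: (classic (exists k, [/\ p < k, k < r0 & nth d s k = x])) =>
         [[k [pk kr sk]] | nok].
      + have ca : c != a.
          apply/eqP => e.
          have : r0 <= p.+1 by apply: r0min; rewrite /Q -/c e eqxx andbT; apply/andP; split; lia.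
          lia.
        have pk1 : p.+1 < k.
          rewrite ltn_neqAle pk andbT; apply/eqP => e; move: spx.
          by rewrite e sk eqxx.
        apply: (obs c a x) => //; try by rewrite eq_sym.
        * exists p, k; split; first by split => //; lia.
          move=> k' h1 h2 e.
          have : r0 <= k' by apply: r0min; rewrite /Q e eqxx andbT; apply/andP; split; lia.
          lia.
        * exists 0, 1; split; first by split => //; lia.
          move=> k' ? ?; lia.
      + pose Q1 := fun j => [&& 0 < j, j < n & nth d s j == a].
        have exQ1 : exists j, Q1 j by exists p; rewrite /Q1 p0 sp eqxx andbT; lia.
        case: (ex_minnP exQ1) => j1 /and3P [j10 j1n /eqP sj1] j1min.
        have j11 : 1 < j1.
          rewrite ltn_neqAle j10 andbT; apply/eqP => e; move: xa.
          by rewrite -s1 e sj1 eqxx.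
        apply: (obs x a a) => //; try by rewrite eq_sym.
        * exists 0, j1; split; first by split.
          move=> k h1 h2 e.
          have : j1 <= k by apply: j1min; rewrite /Q1 e eqxx andbT; apply/andP; split; lia.
          lia.
        * exists p, r0; split; first by split.
          move=> k h1 h2 e; apply: nok; exists k; by split.
    have nox : forall k, p < k -> k < n -> nth d s k <> x.
      move=> k pk kn sk.
      have ca : c != a by apply/eqP; apply: noa; lia.
      have pk1 : p.+1 < k.
        rewrite ltn_neqAle pk andbT; apply/eqP => e; move: spx.
        by rewrite e sk eqxx.
      apply: (obs c a x) => //; try by rewrite eq_sym.
      + exists p, k; split; first by split.
        move=> k' h1 h2; apply: noa; lia.
      + exists 0, 1; split; first by split => //; lia.
        move=> k' ? ?; lia.
    move=> i k ip pk kn e.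
    have la : nth d s k <> a := noa k pk kn.
    have lx : nth d s k <> x := nox k pk kn.
    have i0 : 0 < i by case: i e {ip} => // e; exfalso; apply: la; rewrite -e.
    have i1 : 1 < i.
      rewrite ltn_neqAle i0 andbT; apply/eqP => e'; apply: lx; by rewrite -e -e'.
    have ip' : i < p.
      rewrite ltn_neqAle ip andbT; apply/eqP => e'; apply: la; by rewrite -e e'.
    pose Q2 := fun j => (j < i) && (nth d s j == a).
    have exQ2 : exists j, Q2 j by exists 0; rewrite /Q2 i0 s0 eqxx.
    have ubQ2 : forall j, Q2 j -> j <= i by move=> j /andP [/ltnW].
    case: (ex_maxnP exQ2 ubQ2) => p' /andP [p'i /eqP sp'] p'max.
    have sp'1 : nth d s p'.+1 = x.
      case: (posnP p') => [-> //| p'0]; apply: minf => //; lia.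
    have p'1 : p'.+1 < i.
      rewrite ltn_neqAle p'i andbT; apply/eqP => e'; apply: lx.
      by rewrite -e -e' sp'1.
    apply: (obs x a (nth d s k)) => //.
    + rewrite -e; apply: Hg; lia.
    + by rewrite eq_sym.
    + by apply/eqP.
    + exists p', i; split; first by split => //; lia.
      move=> k' h1 h2 e2.
      have : k' <= p' by apply: p'max; rewrite /Q2 e2 eqxx andbT; lia.
      lia.
    + exists p, k; split; first by split.
      move=> k' h1 h2; apply: nox; lia.
have inU : forall m, m.+1 < size b ->
    exists k, [/\ p < k, k < n & nth d b m.+1 = nth d s k].
  elim=> [|m IH] hm.
  - by exists q.+1; split; [lia | lia | rewrite sq1 b1].
  - case: (IH (ltnW hm)) => k [pk kn e].
    have : (nth d b m.+1, nth d b m.+2) \in prs s.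
      by rewrite (perm_mem Hp); apply: prs_mem.
    case/(mem_prs d) => i [i1 /= e1 e2].
    have pi : p < i.
      rewrite ltnNge; apply/negP => ip; apply: (Hdisj i k ip pk kn).
      by rewrite e1 e.
    by exists i.+1; split => //; lia.
have : (a, x) \in prs b by rewrite -(perm_mem Hp).
case/(mem_prs d) => m [mb /= e1 e2].
case: m mb e1 e2 => [|m] mb e1 e2.
  by rewrite b1 /= in e2; rewrite e2 eqxx in Hxy.
case: (inU m (ltnW mb)) => k [pk kn e].
by apply: (Hdisj 0 k) => //; rewrite s0 -e e1.
Qed.

End Key.

Section Top.
Variable T : finType.
Implicit Types w : seq T.

Lemma size_delim w : size (delim w) = (size w).+2.
Proof. by rewrite /delim /= size_rcons size_map. Qed.

Lemma nth_delimS w i : nth None (delim w) i.+1 = nth None (map Some w) i.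
Proof.
rewrite /delim /= nth_rcons size_map.
case: ltnP => // h; case: eqP => [->|_]; by rewrite nth_default // size_map.
Qed.

Lemma nth_mapSome w i (A : T) : nth None (map Some w) i = Some A ->
  i < size w /\ nth A w i = A.
Proof.
case: (ltnP i (size w)) => h.
  by rewrite (nth_map A) // => [[]].
by rewrite nth_default // size_map.
Qed.

Lemma delim_good w i : 0 < i -> i.+1 < size (delim w) -> nth None (delim w) i != None.
Proof.
case: i => // i _; rewrite size_delim ltnS => h; rewrite nth_delimS.
move: h; case: w => [|x0 w'] // h.
by rewrite (nth_map x0).
Qed.

Lemma nth_cat_size (S : eqType) (d : S) (P s : seq S) i :
  nth d (P ++ s) (size P + i) = nth d s i.
Proof. by elim: P. Qed.

Lemma PosI_cat (S : eqType) (d : S) P s X A B :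
  PosI d s X A B -> PosI d (P ++ s) X A B.
Proof.
case=> i [j [[h1 h2 h3 h4 h5] h6]]; exists (size P + i), (size P + j); split.
  split; rewrite ?size_cat -?addnS ?nth_cat_size //; lia.
move=> k k1 k2; have -> : k = size P + (k - size P) by lia.
rewrite nth_cat_size; apply: h6; lia.
Qed.

Lemma PosJ_cat (S : eqType) (d : S) P s X A B :
  PosJ d s X A B -> PosJ d (P ++ s) X A B.
Proof.
case=> i [j [[h1 h2 h3 h4] h6]]; exists (size P + i), (size P + j); split.
  split; rewrite ?size_cat ?nth_cat_size //; lia.
move=> k k1 k2; have -> : k = size P + (k - size P) by lia.
rewrite nth_cat_size; apply: h6; lia.
Qed.

Lemma split_at (S : Type) (x0 : S) (s : seq S) i j : i < j -> j < size s ->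
  s = take i s ++ nth x0 s i :: take (j - i.+1) (drop i.+1 s) ++
      nth x0 s j :: drop j.+1 s.
Proof.
move=> ij js.
rewrite -[s in LHS](cat_take_drop i) (drop_nth x0); last by lia.
rewrite -[drop i.+1 s in LHS](cat_take_drop (j - i.+1)) drop_drop subnK //.
by rewrite (drop_nth x0 js).
Qed.

Lemma nth_mid (S : Type) (x0 : S) (s : seq S) i j k : k < j - i.+1 ->
  nth x0 (take (j - i.+1) (drop i.+1 s)) k = nth x0 s (i.+1 + k).
Proof. by move=> h; rewrite nth_take // nth_drop. Qed.

Lemma size_mid (S : Type) (s : seq S) i j : j < size s ->
  size (take (j - i.+1) (drop i.+1 s)) = j - i.+1.
Proof. move=> h; rewrite size_take size_drop; case: ltnP => //; lia. Qed.

Lemma in_I_pos w (x0 : T) i j : i.+1 < j -> j < size w ->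
  (forall k, i.+1 < k -> k < j -> nth x0 w k != nth x0 w i) ->
  in_I (nth x0 w i.+1) (nth x0 w i) (nth x0 w j) w.
Proof.
move=> ij js mid.
have E := split_at x0 ij js.
exists (take i w), (take (j - i.+2) (drop i.+2 w)), (drop j.+1 w); split.
  apply/(all_nthP x0) => k; rewrite size_mid // => hk.
  rewrite nth_mid //; apply: mid; lia.
rewrite {1}E (take_nth x0) ?cat_rcons //; lia.
Qed.

Lemma in_J_pos w (x0 X : T) i j : i < j -> j < size w ->
  (forall k, i < k -> k < j -> nth x0 w k != X) ->
  in_J X (nth x0 w i) (nth x0 w j) w.
Proof.
move=> ij js mid.
have E := split_at x0 ij js.
exists (take i w), (take (j - i.+1) (drop i.+1 w)), (drop j.+1 w); split => //.
apply/(all_nthP x0) => k; rewrite size_mid // => hk.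
rewrite nth_mid //; apply: mid; lia.
Qed.

Lemma mid_delim w (x0 A : T) k : k < size w ->
  nth None (delim w) k.+1 <> Some A -> nth x0 w k != A.
Proof.
move=> hk; rewrite nth_delimS (nth_map x0) // => h.
by apply/eqP => e; apply: h; rewrite e.
Qed.

Lemma PosI_delim w (X A B : T) :
  PosI None (delim w) (Some X) (Some A) (Some B) -> in_I X A B w.
Proof.
case=> [[|i]] [[|j]] [[h1 h2 h3 h4 h5] h6] //.
rewrite !nth_delimS in h3 h4 h5.
have [hi ei] := nth_mapSome h3.
have [hi1 ei1] := nth_mapSome h4.
have [hj ej] := nth_mapSome h5.
rewrite (set_nth_default A) // in ei1.
rewrite (set_nth_default A) // in ej.
have := @in_I_pos w A i j; rewrite ei ei1 ej; apply => //.
move=> k k1 k2; apply: mid_delim; first by lia.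
apply: h6; lia.
Qed.

Lemma PosJ_delim w (X A B : T) :
  PosJ None (delim w) (Some X) (Some A) (Some B) -> in_J X A B w.
Proof.
case=> [[|i]] [[|j]] [[h1 h2 h3 h5] h6] //.
rewrite !nth_delimS in h3 h5.
have [hi ei] := nth_mapSome h3.
have [hj ej] := nth_mapSome h5.
rewrite (set_nth_default A) // in ej.
have := @in_J_pos w A X i j; rewrite ei ej; apply => //.
move=> k k1 k2; apply: mid_delim; first by lia.
apply: h6; lia.
Qed.


Lemma Phi_perm (z z' : seq (option T)) : Phi z = Phi z' -> perm_eq (prs z) (prs z').
Proof.
move=> H; apply/allP => ij _ /=; apply/eqP.
by move/ffunP: H => /(_ ij); rewrite !ffunE !zip_prs.
Qed.

Lemma perm_Phi (z z' : seq (option T)) : perm_eq (prs z) (prs z') -> Phi z = Phi z'.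
Proof. by move=> H; apply/ffunP => ij; rewrite !ffunE !zip_prs; apply: (permP H). Qed.

Lemma hard w : ~ L_OBST w -> L_UNIQ w.
Proof.
move=> nob w' Hphi.
have Hp : perm_eq (prs (delim w)) (prs (delim w')) by apply: Phi_perm; rewrite Hphi.
have Hsz : size (rcons (map Some w) None) = size (rcons (map Some w') None).
  by have := perm_size Hp; rewrite !size_prs !size_delim !size_rcons !size_map => [[->]].
case: (eqVneq (delim w') (delim w)) => // Hne; exfalso; apply: nob.
have Hne' : delim w != delim w' by rewrite eq_sym.
have [P [a [x [y [R [R' [Ez Ez' Hxy]]]]]]] := first_diff Hsz Hne'.
change (delim w = P ++ a :: x :: R) in Ez.
change (delim w' = P ++ a :: y :: R') in Ez'.
have Hp2 : perm_eq (prs (a :: x :: R)) (prs (a :: y :: R')).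
  by move: Hp; rewrite Ez Ez' !prs_cat perm_cat2l.
have Hg : forall i, 0 < i -> i.+1 < size (a :: x :: R) ->
    (nth None (a :: x :: R) i != None).
  move=> i i0 hi; rewrite -(nth_cat_size None P) -Ez; apply: delim_good; first by lia.
  by rewrite Ez size_cat -addnS ltn_add2l.
have [X [A [B [[gA gB AX BX] [HI HJ]]]]] :=
  @key _ None (fun c => c != None) _ _ _ _ _ Hp2 Hxy Hg.
have HI' := PosI_cat P HI; rewrite -Ez in HI'.
have HJ' := PosJ_cat P HJ; rewrite -Ez in HJ'.
case: X AX BX HI HJ HI' HJ' => [X0|] AX BX _ _ HI' HJ'; last first.
  case: HI' => i [j [[h1 h2 _ h4 _] _]].
  have : nth None (delim w) i.+1 != None by apply: delim_good => //; exact: leq_ltn_trans h1 h2.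
  by rewrite h4.
case: A gA AX HI' HJ' => [A0|] // _ AX HI' HJ'.
case: B gB BX HI' HJ' => [B0|] // _ BX HI' HJ'.
exists X0, A0, B0; split => //; split => //; split.
  exact: PosI_delim.
exact: PosJ_delim.
Qed.

Lemma not_uniq w w' : perm_eq (prs (delim w)) (prs (delim w')) -> w' != w -> ~ L_UNIQ w.
Proof.
move=> Hp Hne HU; have E := HU w' (esym (perm_Phi Hp)).
case: E => /rcons_inj [] /(inj_map (@Some_inj _)) e.
by rewrite e eqxx in Hne.
Qed.

Lemma delimA U Sx Y Sy M (a b : T) :
  delim (U ++ a :: Sx ++ b :: Y ++ a :: Sy ++ b :: M) =
  (None :: map Some U) ++ Some a :: map Some Sx ++ Some b :: map Some Y ++
    Some a :: map Some Sy ++ Some b :: rcons (map Some M) None.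
Proof. by rewrite /delim; do 5 rewrite ?map_cat /= ?rcons_cat /=. Qed.

Lemma delimB U Sx Sy M (a : T) :
  delim (U ++ a :: Sx ++ a :: Sy ++ a :: M) =
  (None :: map Some U) ++ Some a :: map Some Sx ++ Some a :: map Some Sy ++
    Some a :: rcons (map Some M) None.
Proof. by rewrite /delim; do 5 rewrite ?map_cat /= ?rcons_cat /=. Qed.

Lemma swapA_nu w U Sx Y Sy M (a b : T) :
  w = U ++ a :: Sx ++ b :: Y ++ a :: Sy ++ b :: M -> head b Sx != head b Sy ->
  ~ L_UNIQ w.
Proof.
move=> -> hne; apply: (@not_uniq _ (U ++ a :: Sy ++ b :: Y ++ a :: Sx ++ b :: M)).
  by rewrite !delimA; apply: swapA.
apply/eqP => /catsI' [] /(congr1 (head b)); rewrite !head_cat_d => e.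
by rewrite e eqxx in hne.
Qed.

Lemma swapB_nu w U Sx Sy M (a : T) :
  w = U ++ a :: Sx ++ a :: Sy ++ a :: M -> head a Sx != head a Sy ->
  ~ L_UNIQ w.
Proof.
move=> -> hne; apply: (@not_uniq _ (U ++ a :: Sy ++ a :: Sx ++ a :: M)).
  by rewrite !delimB; apply: swapB.
apply/eqP => /catsI' [] /(congr1 (head a)); rewrite !head_cat_d => e.
by rewrite e eqxx in hne.
Qed.

Lemma nhas_all (e : T) s : ~~ has (pred1 e) s -> all (fun c => c != e) s.
Proof.
move=> h; apply/allP => c hc; apply/eqP => ec; move/negP: h; apply.
by apply/hasP; exists c => //=; rewrite ec.
Qed.

Lemma easy w : L_OBST w -> ~ L_UNIQ w.
Proof.
case=> x [a [b [ax [bx [[u [v [m [Hv Ew]]]] [u2 [v2 [m2 [Hv2 Ew2]]]]]]]]].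
have [v1 [mI [Hv1a Hv1b EwI]]] : exists v1 mI, [/\ all (fun c => c != a) v1,
    all (fun c => c != b) v1 & w = u ++ a :: x :: v1 ++ b :: mI].
  case: (boolP (has (pred1 b) v)) => hb.
  - case: (first_split hb) => v1 [c [v3 [/eqP Hc hv1 Ev]]]; subst c v.
    move: Hv; rewrite all_cat => /andP [Hv1 _].
    exists v1, (v3 ++ b :: m); split => //; first exact: nhas_all.
    by rewrite Ew -catA.
  - by exists v, m; split => //; exact: nhas_all.
have [uJ [S3 [mJ [[H3a H3b H3x] EwJ]]]] : exists uJ S3 mJ,
    [/\ all (fun c => c != a) S3, all (fun c => c != b) S3 &
        all (fun c => c != x) S3] /\ w = uJ ++ a :: S3 ++ b :: mJ.
  have [v21 [m3 [H21b H21x Ew3]]] : exists v21 m3, [/\ all (fun c => c != b) v21,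
      all (fun c => c != x) v21 & w = u2 ++ a :: v21 ++ b :: m3].
    case: (boolP (has (pred1 b) v2)) => hb.
    - case: (first_split hb) => v1' [c [v3 [/eqP Hc hv1 Ev]]]; subst c v2.
      move: Hv2; rewrite all_cat => /andP [H1 _].
      exists v1', (v3 ++ b :: m2); split => //; first exact: nhas_all.
      by rewrite Ew2 -catA.
    - by exists v2, m2; split => //; exact: nhas_all.
  case: (boolP (has (pred1 a) v21)) => ha.
  - case: (last_split ha) => r1 [c [r2 [/eqP Hc hr2 Er]]]; subst c v21.
    move: H21b H21x; rewrite !all_cat /= => /andP [_ /andP [_ Hb]] /andP [_ /andP [_ Hx]].
    exists (u2 ++ a :: r1), r2, m3; split; first by split => //; exact: nhas_all.
    by rewrite Ew3 -!catA.
  - by exists u2, v21, m3; split => //; split => //; exact: nhas_all.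
have hx : head b S3 != x.
  case: S3 H3x {H3a H3b EwJ} => [|e S3] /=; first by [].
  by case/andP.
have E : u ++ a :: (x :: v1) ++ b :: mI = uJ ++ a :: S3 ++ b :: mJ.
  by rewrite -EwI -EwJ.
have anS1 : a \notin x :: v1 by rewrite in_cons negb_or ax /= all_notin.
have anS3 : a \notin S3 := all_notin H3a.
case: (cat_eq E) => t [[EuJ Er] | [Eu Er]].
- case: t EuJ Er => [|e t'] EuJ /= Er.
  + case: Er => /(congr1 (head b)); rewrite head_cat_d /= => e.
    by rewrite -e eqxx in hx.
  + case: Er => _ Er.
    case: (cat_eq1 anS1 Er) => [[Y [Et' EmI]] | [Et' [Eba EmI]]].
    * apply: (@swapA_nu w u (x :: v1) Y S3 mJ a b); first by rewrite EwI EmI.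
      by rewrite /= eq_sym.
    * subst b; apply: (@swapB_nu w u (x :: v1) S3 mJ a); first by rewrite EwI EmI.
      by rewrite /= eq_sym.
- case: t Eu Er => [|e t'] Eu /= Er.
  + case: Er => /(congr1 (head b)); rewrite head_cat_d /= => e.
    by rewrite e eqxx in hx.
  + case: Er => _ Er.
    case: (cat_eq1 anS3 Er) => [[Y [Et' EmJ]] | [Et' [Eba EmJ]]].
    * apply: (@swapA_nu w uJ S3 Y (x :: v1) mI a b); first by rewrite EwJ EmJ.
      by [].
    * subst b; apply: (@swapB_nu w uJ S3 (x :: v1) mI a); first by rewrite EwJ EmJ.
      by [].
Qed.

Lemma theorem2_aux w : L_UNIQ w <-> ~ L_OBST w.
Proof.
split; first by move=> HU HO; exact: (easy HO HU).
exact: hard.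
Qed.

End Top.

Unset Implicit Arguments.

Theorem theorem2 (T : finType) (w : seq T) : L_UNIQ w <-> ~ L_OBST w.
Proof. exact: theorem2_aux. Qed.
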